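(* Let $W$ be an outcome satisfying UPRF. Then $W$ satisfies $\frac{3+\sqrt{17}}{2}$-proportional fairness, satisfies $3$-individual fairness (when $N\subseteq C$), and is in the $\left(\gamma,\frac{3\gamma}{\gamma-1}\right)$-transferable core for every $\gamma>1$.
   Context: Let $(\mathcal X,d)$ be a metric space, $N=[n]$ a set of agents and $C$ a set of candidates located in $\mathcal X$, $k\in\mathbb N^+$; an outcome is $W\subseteq C$ with $|W|\le k$; $B(i,r)=\{x\in\mathcal X:d(i,x)\le r\}$; $d(i,W)=\min_{c\in W}d(i,c)$. UPRF: there are no $\ell\in\mathbb N$, no $N'\subseteq N$ with $|N'|\ge\ell n/k$, and no $y\in\mathbb R$ with $\max_{i,i'\in N'}d(i,i')\le y$ and $|\bigcup_{i\in N'}B(i,y)\cap W|<\ell$. $\alpha$-proportional fairness: there is no $N'\subseteq N$ with $|N'|\ge n/k$ and $c\in C\setminus W$ with $\alpha\,d(i,c)<d(i,W)$ for all $i\in N'$. $\beta$-individual fairness (defined only for instances with $N\subseteq C$): $d(i,W)\le\beta\,r(i)$ for all $i\in N$, where $r(i)=\min\{r: |B(i,r)\cap N|\ge n/k\}$. $(\gamma,\alpha)$-transferable core: there is no $N'\subseteq N$ and $c\in C\setminus W$ with $|N'|\ge\gamma n/k$ and $\alpha\sum_{i\in N'}d(i,c)<\sum_{i\in N'}d(i,W)$. *)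

(* Defs.v *)
From HB Require Import structures.
From mathcomp Require Import all_boot all_order all_algebra.
From mathcomp Require Import reals constructive_ereal.
Set Implicit Arguments. Unset Strict Implicit. Unset Printing Implicit Defensive.
Import Order.TTheory GRing.Theory Num.Theory.
Local Open Scope ring_scope.

Definition is_metric (R : realType) (X : Type) (d : X -> X -> R) : Prop :=
  [/\ forall x y, 0 <= d x y,
      forall x y, d x y = 0 <-> x = y,
      forall x y, d x y = d y x &
      forall x y z, d x z <= d x y + d y z].

Section Election.
Variables (R : realType) (X : Type) (d : X -> X -> R).
(* n agents, located by [loc]; candidates are the elements of a finite type
   [Cand], located by [cl]. *)
Variables (n k : nat) (Cand : finType) (loc : 'I_n -> X) (cl : Cand -> X).

(* d(i, W) = min_{c in W} d(i,c), with the convention min over the empty set = +oo *)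
Definition distW (i : 'I_n) (W : {set Cand}) : \bar R :=
  \big[Order.min/+oo%E]_(c in W) (d (loc i) (cl c))%:E.

Definition UPRF (W : {set Cand}) : Prop :=
  ~ exists (l : nat) (N' : {set 'I_n}) (y : R),
      [/\ (l%:R * n%:R / k%:R <= #|N'|%:R :> R),
          (forall i i', i \in N' -> i' \in N' -> d (loc i) (loc i') <= y) &
          (#|[set c in W | [exists i in N', (d (loc i) (cl c) <= y)%R]]| < l)%N].

Definition prop_fair (alpha : R) (W : {set Cand}) : Prop :=
  ~ exists (N' : {set 'I_n}) (c : Cand),
      [/\ (n%:R / k%:R <= #|N'|%:R :> R), c \notin W &
          forall i, i \in N' -> ((alpha * d (loc i) (cl c))%:E < distW i W)%E].

Definition ball_big (i : 'I_n) (r : R) : bool :=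
  n%:R / k%:R <= #|[set j : 'I_n | (d (loc i) (loc j) <= r)%R]|%:R :> R.

(* r(i) = min { r : |B(i,r) ∩ N| >= n/k } : [is_r i r] says r is this minimum *)
Definition is_r (i : 'I_n) (r : R) : Prop :=
  ball_big i r /\ forall r', ball_big i r' -> r <= r'.

(* beta-individual fairness (only meaningful when N ⊆ C) *)
Definition indiv_fair (beta : R) (W : {set Cand}) : Prop :=
  forall i r, is_r i r -> (distW i W <= (beta * r)%:E)%E.

Definition transf_core (gamma alpha : R) (W : {set Cand}) : Prop :=
  ~ exists (N' : {set 'I_n}) (c : Cand),
      [/\ (gamma * n%:R / k%:R <= #|N'|%:R :> R), c \notin W &
          ((alpha * \sum_(i in N') d (loc i) (cl c))%:E
             < \sum_(i in N') distW i W)%E].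
End Election.

(* Main.v *)
Require Import Defs.
From HB Require Import structures.
From mathcomp Require Import all_boot all_order all_algebra.
From mathcomp Require Import reals constructive_ereal.
From mathcomp Require Import ring lra.
Import Order.TTheory GRing.Theory Num.Theory.
Local Open Scope ring_scope.

Set Implicit Arguments. Unset Strict Implicit. Unset Printing Implicit Defensive.

Lemma distW_le (R : realType) (X : Type) (d : X -> X -> R) (n : nat) (Cand : finType)
  (loc : 'I_n -> X) (cl : Cand -> X) i (W : {set Cand}) w :
  w \in W -> (distW d loc cl i W <= (d (loc i) (cl w))%:E)%E.
Proof. move=> wW; rewrite /distW; exact: (bigmin_le_cond _ _ wW). Qed.

Lemma uprf1 (R : realType) (X : Type) (d : X -> X -> R) (n k : nat) (Cand : finType)
  (loc : 'I_n -> X) (cl : Cand -> X) (W : {set Cand}) :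
  UPRF d k loc cl W ->
  forall (N' : {set 'I_n}) (y : R), n%:R / k%:R <= #|N'|%:R :> R ->
  (forall i i', i \in N' -> i' \in N' -> d (loc i) (loc i') <= y) ->
  exists w, exists i, [/\ w \in W, i \in N' & d (loc i) (cl w) <= y].
Proof.
move=> U N' y hN hy.
set S := [set c in W | [exists i in N', d (loc i) (cl c) <= y]].
have [S0|[w]] := set_0Vmem S.
  exfalso; apply: U; exists 1%N, N', y; split => //.
    by rewrite mul1r.
  by rewrite -/S S0 cards0.
by rewrite inE => /andP[wW /existsP[i /andP[iN h]]]; exists w, i.
Qed.

Lemma exists_max (T : finType) (R : realType) (A : {set T}) (F : T -> R) i0 :
  i0 \in A -> exists2 a, a \in A & forall i, i \in A -> F i <= F a.
Proof.
move=> Ai0; case: (@arg_maxP _ R T i0 (fun i => i \in A) F Ai0) => a Aa H.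
by exists a.
Qed.

Lemma serve (R : realType) (X : Type) (d : X -> X -> R) (n k : nat) (Cand : finType)
  (loc : 'I_n -> X) (cl : Cand -> X) (W : {set Cand}) (c : X) :
  is_metric d -> UPRF d k loc cl W -> 0 < n%:R / k%:R :> R ->
  forall (m : nat) (A : {set 'I_n}), #|A| = m ->
  exists (Sv : {set 'I_n}) (f : 'I_n -> R),
   [/\ Sv \subset A, #|A :\: Sv|%:R < n%:R / k%:R :> R,
       (forall i, i \in Sv -> (distW d loc cl i W <= (f i)%:E)%E) &
       \sum_(i in Sv) f i <= 2 * \sum_(i in A) d (loc i) c].
Proof.
move=> [d0 deq dsym dtri] U p0; elim=> [|m IH] A cA.
  exists set0, (fun _ => 0); split => //.
  - exact: sub0set.
  - by move/eqP: cA; rewrite cards_eq0 => /eqP ->; rewrite setD0 cards0.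
  - by move=> i; rewrite inE.
  - by rewrite big_set0 mulr_ge0 // sumr_ge0.
have [i0 Ai0] : exists i0, i0 \in A.
  by apply/set0Pn; rewrite -card_gt0 cA.
have [a Aa amax] := exists_max (fun i => d (loc i) c) Ai0.
have cA' : #|A :\ a| = m by move: cA; rewrite (cardsD1 a) Aa add1n => -[].
have [Sv' [f' [sub' card' hf' sum' ]]] := IH _ cA'.
set Rst := (A :\ a) :\: Sv'.
set Ub := a |: Rst.
have sumA : \sum_(i in A) d (loc i) c = d (loc a) c + \sum_(i in A :\ a) d (loc i) c.
  by rewrite (big_setD1 a Aa).
have UbA : Ub \subset A.
  apply/subsetP => i; rewrite !inE => /orP[/eqP->//|].
  by case/andP => _ /andP[_ ->].
have Sv'A : Sv' \subset A.
  apply: (subset_trans sub'); apply/subsetP => i; rewrite !inE.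
  by case/andP.
have cUb : (#|Ub| <= #|Rst|.+1)%N.
  by rewrite /Ub cardsU1; case: (a \in Rst).
have ADUb : A :\: Sv' \subset Ub.
  apply/subsetP => i; rewrite !inE => /andP[iS iA].
  by case: (i =P a) => //= _; rewrite iS iA.
have xge0 : 0 <= \sum_(i in A :\ a) d (loc i) c by rewrite sumr_ge0.
case: (leP (n%:R / k%:R) (#|Ub|%:R : R)) => hU.
- have [w [j [wW jU hj]]] : exists w, exists i, [/\ w \in W, i \in Ub &
      d (loc i) (cl w) <= 2 * d (loc a) c].
    apply: (uprf1 U hU) => i i' iU i'U.
    apply: (le_trans (dtri _ c _)); rewrite (dsym c).
    have := amax i (subsetP UbA _ iU); have := amax i' (subsetP UbA _ i'U).
    move=> /= h1 h2; lra.
  have jS : j \notin Sv'.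
    move: jU; rewrite !inE => /orP[/eqP->|/andP[//]].
    apply/negP => /(subsetP sub'); by rewrite !inE eqxx.
  exists (j |: Sv'), (fun i => if i == j then d (loc j) (cl w) else f' i).
  split.
  + by rewrite subUset sub1set (subsetP UbA _ jU).
  + apply: le_lt_trans card'; rewrite ler_nat.
    have : A :\: (j |: Sv') \subset Ub :\ j.
      apply/subsetP => i; rewrite !inE negb_or => /andP[/andP[ij iS] iA].
      by rewrite ij iS iA /=; case: (i == a).
    move/subset_leq_card => h; apply: (leq_trans h).
    move: cUb; rewrite (cardsD1 j) jU add1n => h2.
    have : (#|Ub :\ j|.+1 <= #|Rst|.+1)%N by [].
    by rewrite ltnS.
  + move=> i; rewrite !inE; case: (i =P j) => [->|ij] /= => [_|iS].
      exact: distW_le.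
    exact: hf'.
  + rewrite big_setU1 //= eqxx.
    rewrite (eq_bigr f'); last first.
      by move=> i iS; case: (i =P j) => // ij; move: iS; rewrite ij (negbTE jS).
    rewrite sumA; lra.
- exists Sv', f'; split => //.
  + by apply: le_lt_trans hU; rewrite ler_nat; exact: subset_leq_card ADUb.
  + rewrite sumA; have := d0 (loc a) c; lra.
Qed.

Lemma alpha_fact (R : realType) :
  0 < (3 + Num.sqrt 17) / 2 :> R /\
  ((3 + Num.sqrt 17) / 2) * ((3 + Num.sqrt 17) / 2) = 3 * ((3 + Num.sqrt 17) / 2) + 2 :> R.
Proof.
have s2 : Num.sqrt 17 * Num.sqrt 17 = 17 :> R by rewrite -expr2 sqr_sqrtr.
have s0 : 0 <= Num.sqrt 17 :> R by rewrite sqrtr_ge0.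
split; first lra.
nra.
Qed.

Theorem theorem6 (R : realType) (X : Type) (d : X -> X -> R)
  (n k : nat) (Cand : finType) (loc : 'I_n -> X) (cl : Cand -> X)
  (W : {set Cand}) :
  is_metric d -> (0 < k)%N -> (#|W| <= k)%N ->
  UPRF d k loc cl W ->
  [/\ prop_fair d k loc cl ((3 + Num.sqrt 17) / 2) W,
      ((forall i : 'I_n, exists c : Cand, cl c = loc i) ->
         indiv_fair d k loc cl 3 W) &
      (forall gamma : R, 1 < gamma ->
         transf_core d k loc cl gamma (3 * gamma / (gamma - 1)) W)].
Proof.
move=> met k0 Wk U.
have [d0 deq dsym dtri] := met.
have n0 : (0 < n)%N.
  rewrite lt0n; apply/negP => /eqP n0.
  have [w [j [_ ]]] := uprf1 U (N' := set0) (y := 0)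
    (ltac:(by rewrite n0 mul0r cards0)) (fun i i' => ltac:(by rewrite inE)).
  by rewrite inE.
have p0 : 0 < n%:R / k%:R :> R by rewrite divr_gt0 // ltr0n.
split.
- move=> [N' [c [hN cW hlt]]].
  have [sa sa2] := alpha_fact R.
  move: hlt sa sa2; set al := (3 + Num.sqrt 17) / 2 => hlt sa sa2.
  have [N0|[i0 Ni0]] := set_0Vmem N'.
    have [w [j [_ ]]] := uprf1 U hN (y := 0) (fun i i' => ltac:(by rewrite N0 inE)).
    by rewrite N0 inE.
  have [a Na amax] := exists_max (fun i => d (loc i) (cl c)) Ni0.
  have [w [j [wW jN hj]]] := uprf1 U hN (y := 2 * d (loc a) (cl c))
     (fun i i' iN i'N => ltac:(
        apply: (le_trans (dtri _ (cl c) _)); rewrite (dsym (cl c));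
        have := amax i iN; have := amax i' i'N; move=> /= h1 h2; lra)).
  have r1 : al * d (loc j) (cl c) < d (loc j) (cl w).
    by rewrite -lte_fin; exact: lt_le_trans (hlt j jN) (distW_le _ _ _ _ wW).
  have r2 : al * d (loc a) (cl c) < d (loc a) (cl w).
    by rewrite -lte_fin; exact: lt_le_trans (hlt a Na) (distW_le _ _ _ _ wW).
  have t : d (loc a) (cl w) <= d (loc a) (cl c) + d (loc j) (cl c) + d (loc j) (cl w).
    have := dtri (loc a) (cl c) (cl w); have := dtri (cl c) (loc j) (cl w).
    rewrite (dsym (cl c) (loc j)); lra.
  have m1 := ler_wpM2l (ltW sa) t.
  have m2 := ler_wpM2l (ltW sa) hj.
  have m3 : al * (al * d (loc a) (cl c)) < al * d (loc a) (cl w) by rewrite ltr_pM2l.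
  have e3 : al * (al * d (loc a) (cl c)) = 3 * (al * d (loc a) (cl c)) + 2 * d (loc a) (cl c).
    by rewrite mulrA sa2 mulrDl mulrA.
  rewrite e3 in m3; rewrite !mulrDr in m1.
  move: m1 m2 m3 r1; rewrite mulrCA.
  lra.
- move=> _ i r [hb _].
  have [w [j [wW jB hj]]] := uprf1 U hb (y := 2 * r)
     (fun j1 j2 h1 h2 => ltac:(
        move: h1 h2; rewrite !inE => h1 h2;
        have := dtri (loc j1) (loc i) (loc j2); rewrite (dsym (loc j1) (loc i)); lra)).
  apply: (le_trans (distW_le _ _ _ _ wW)); rewrite lee_fin.
  move: jB; rewrite inE => hj2; have := dtri (loc i) (loc j) (cl w); lra.
- move=> g g1 [N' [c [hN cW hlt]]].
  pose x := fun i => d (loc i) (cl c).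
  pose S := \sum_(i in N') x i.
  pose p : R := n%:R / k%:R.
  have hN' : g * p <= #|N'|%:R by rewrite /p mulrA.
  have S0 : 0 <= S by apply: sumr_ge0 => i _; exact: d0.
  have x0 : forall i, 0 <= x i by move=> i; exact: d0.
  have g0 : 0 < g - 1 by rewrite subr_gt0.
  have pg : 0 < p * (g - 1) by rewrite mulr_gt0.
  pose tau := S / (p * (g - 1)).
  have tau0 : 0 <= tau by rewrite divr_ge0 // ltW.
  have Stau : S = p * (g - 1) * tau by rewrite /tau mulrC divfK // gt_eqF.
  pose G := [set i in N' | x i <= tau].
  have GN : G \subset N' by apply/subsetP => i; rewrite inE => /andP[].
  have splitS : forall A : {set 'I_n}, A \subset N' ->
      S = \sum_(i in A) x i + \sum_(i in N' :\: A) x i.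
    by move=> A sA; rewrite /S (big_setID A) /= (setIidPr sA).
  have hG : p <= #|G|%:R.
    pose B := N' :\: G.
    have cN : #|N'| = (#|G| + #|B|)%N by rewrite -(cardsID G N') (setIidPr GN).
    have SB : \sum_(i in B) x i <= S.
      by rewrite (splitS G GN) lerDr; apply: sumr_ge0 => i _; exact: d0.
    have Btau : #|B|%:R * tau <= \sum_(i in B) x i.
      have -> : #|B|%:R * tau = \sum_(i in B) tau by rewrite sumr_const mulr_natl.
      apply: ler_sum => i; rewrite !inE => /andP[h iN].
      by move: h; rewrite iN /= -ltNge; exact: ltW.
    have hN2 : g * p <= (#|G| + #|B|)%:R by rewrite -cN.
    rewrite natrD in hN2.
    case: (leP (#|B|%:R) (p * (g - 1))) => hB; first lra.
    have hBp : 0 < #|B|%:R - p * (g - 1) by rewrite subr_gt0.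
    have tauz : tau <= 0.
      have : (#|B|%:R - p * (g - 1)) * tau <= 0.
        by rewrite mulrBl -Stau; lra.
      by rewrite pmulr_rle0.
    have [b bB] : exists b, b \in B.
      have : 0 < #|B|%:R :> R by lra.
      by rewrite ltr0n card_gt0 => /set0Pn.
    have xb : x b <= \sum_(i in B) x i.
      by rewrite (bigD1 b) //= lerDl; apply: sumr_ge0 => i _; exact: d0.
    have : tau < x b by move: bB; rewrite !inE => /andP[h iN]; move: h; rewrite iN /= -ltNge.
    move: SB xb; rewrite Stau; nra.
  have [w0 [j0 [w0W j0G hj0]]] := uprf1 U hG (y := 2 * tau)
     (fun i i' iG i'G => ltac:(
        move: iG i'G; rewrite !inE => /andP[_ h1] /andP[_ h2];
        have := dtri (loc i) (cl c) (loc i'); rewrite (dsym (cl c) (loc i'));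
        rewrite /x /= in h1 h2; lra)).
  have hc : forall i, d (loc i) (cl w0) <= x i + 3 * tau.
    move=> i; move: j0G; rewrite !inE => /andP[_ hj].
    have := dtri (loc i) (cl c) (cl w0); have := dtri (cl c) (loc j0) (cl w0).
    rewrite (dsym (cl c) (loc j0)) /x /= in hj *; lra.
  have [Sv [f [subS cardS hf sumf]]] := serve (cl c) met U p0 (erefl #|N'|).
  have le1 : (\sum_(i in N') distW d loc cl i W <=
      (\sum_(i in Sv) f i + \sum_(i in N' :\: Sv) (x i + 3 * tau))%:E)%E.
    rewrite (big_setID Sv) /= (setIidPr subS) EFinD.
    apply: leeD; rewrite -sumEFin; apply: lee_sum => i.
      exact: hf.
    move=> _; apply: (le_trans (distW_le _ _ _ _ w0W)); rewrite lee_fin; exact: hc.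
  have le2 := lt_le_trans hlt le1; rewrite lte_fin in le2.
  rewrite big_split /= sumr_const in le2.
  have hxr : \sum_(i in N' :\: Sv) x i <= S by rewrite (splitS Sv subS) lerDr; apply: sumr_ge0 => i _; exact: d0.
  have sumf' : \sum_(i in Sv) f i <= 2 * S by exact: sumf.
  have ct : (3 * tau) *+ #|N' :\: Sv| <= 3 * tau * p.
    rewrite -mulr_natr; apply: ler_wpM2l; first lra.
    exact: ltW.
  have ptau : p * tau = S / (g - 1).
    rewrite /tau; field; rewrite ?gt_eqF //; apply/andP; split; rewrite gt_eqF //.
  have e : 3 * g / (g - 1) * S = 3 * S + 3 * (p * tau).
    rewrite ptau; field; rewrite gt_eqF //.
  move: le2; rewrite -/S e; lra.
Qed.
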